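(* There exists a set $\mathcal X$ of four points in $\mathbb R^3$ (with Euclidean distance) having a perfect $2$-clustering $\mathcal C=\{C_1,C_2\}$ that is a global minimizer of the $2$-means cost, i.e. $\sum_{i=1}^2\sum_{x\in C_i}\|x-\mu(C_i)\|^2\le \sum_{i=1}^2\sum_{x\in C_i'}\|x-\mu(C_i')\|^2$ for every $2$-clustering $\{C_1',C_2'\}$ of $\mathcal X$ (where $\mu(C)$ is the mean of $C$), but such that for every ordering of the four points, the final centers produced by sequential $2$-means run on that ordering do not induce $\mathcal C$ on $\mathcal X$.
   Context: A clustering of $\mathcal X$ is a set of nonempty, pairwise disjoint subsets whose union is $\mathcal X$; a $k$-clustering has exactly $k$ clusters. Write $x\sim_{\mathcal C}y$ if $x,y$ are in the same cluster and $x\not\sim_{\mathcal C}y$ otherwise. $\mathcal C$ is perfect if $\|x-y\|<\|w-z\|$ whenever $x\sim_{\mathcal C}y$ and $w\not\sim_{\mathcal C}z$. A list of points $T=(t_1,\ldots,t_m)$ induces the clustering of $\mathcal X$ in which each $x$ is assigned to the index $i$ minimizing $\|x-t_i\|$ (ties broken by smallest $i$), empty clusters discarded. Sequential $k$-means on input sequence $x_1,\ldots,x_N$ in $\mathbb R^p$ ($N\ge k$): set $t_i=x_i$ and $n_i=1$ for $i=1,\ldots,k$; then for each subsequent point $x$: let $i$ be the index of the closest center $t_i$ to $x$ (ties broken by smallest index), increment $n_i$, and replace $t_i$ by $t_i+(1/n_i)(x-t_i)$. The output is the final list $(t_1,\ldots,t_k)$. *)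

(* Defs.v *)
From Stdlib Require Import Reals List Permutation.
Import ListNotations.
Open Scope R_scope.

Definition pt : Type := (R * R * R)%type.
Definition pzero : pt := (0, 0, 0).
Definition padd (p q : pt) : pt :=
  let '(a1, a2, a3) := p in let '(b1, b2, b3) := q in (a1 + b1, a2 + b2, a3 + b3).
Definition psub (p q : pt) : pt :=
  let '(a1, a2, a3) := p in let '(b1, b2, b3) := q in (a1 - b1, a2 - b2, a3 - b3).
Definition pscale (c : R) (p : pt) : pt :=
  let '(a1, a2, a3) := p in (c * a1, c * a2, c * a3).
Definition pnorm (p : pt) : R :=
  let '(a1, a2, a3) := p in sqrt (a1 ^ 2 + a2 ^ 2 + a3 ^ 2).
Definition dist (p q : pt) : R := pnorm (psub p q).

(* Subsets of the finite data set X (a list of distinct points) are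
   represented by boolean predicates, only their restriction to X matters. *)

Definition is_2clustering (X : list pt) (C1 C2 : pt -> bool) : Prop :=
  existsb C1 X = true /\ existsb C2 X = true /\
  (forall x, In x X -> C1 x = negb (C2 x)).

Definition same_cluster (C1 C2 : pt -> bool) (x y : pt) : bool :=
  (C1 x && C1 y) || (C2 x && C2 y).

Definition perfect2 (X : list pt) (C1 C2 : pt -> bool) : Prop :=
  forall x y w z, In x X -> In y X -> In w X -> In z X ->
    same_cluster C1 C2 x y = true -> same_cluster C1 C2 w z = false ->
    dist x y < dist w z.

Definition psum (l : list pt) : pt := fold_right padd pzero l.
Definition mean (X : list pt) (C : pt -> bool) : pt :=
  pscale (/ INR (length (filter C X))) (psum (filter C X)).
Definition cluster_cost (X : list pt) (C : pt -> bool) : R :=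
  fold_right Rplus 0 (map (fun x => (dist x (mean X C)) ^ 2) (filter C X)).
Definition cost2 (X : list pt) (C1 C2 : pt -> bool) : R :=
  cluster_cost X C1 + cluster_cost X C2.

(* Index of the closest center (ties broken by smallest index). *)
Fixpoint closest_aux (x : pt) (T : list pt) (i best : nat) (bd : R) : nat :=
  match T with
  | [] => best
  | t :: T' => if Rlt_dec (dist x t) bd
               then closest_aux x T' (S i) i (dist x t)
               else closest_aux x T' (S i) best bd
  end.
Definition closest (x : pt) (T : list pt) : nat :=
  match T with
  | [] => O
  | t :: T' => closest_aux x T' 1 O (dist x t)
  end.

Definition induced (X : list pt) (T : list pt) : list (pt -> bool) :=
  filter (fun A => existsb A X)
    (map (fun i => fun x => Nat.eqb (closest x T) i) (seq 0 (length T))).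

Definition subset_eq (X : list pt) (A B : pt -> bool) : Prop :=
  forall x, In x X -> A x = B x.
Definition family_eq (X : list pt) (F G : list (pt -> bool)) : Prop :=
  (forall A, In A F -> exists B, In B G /\ subset_eq X A B) /\
  (forall B, In B G -> exists A, In A F /\ subset_eq X A B).

(* Sequential k-means. State: list of (center, count). *)
Fixpoint upd (st : list (pt * nat)) (i : nat) (x : pt) : list (pt * nat) :=
  match st, i with
  | [], _ => []
  | (t, n) :: st', O =>
      let n' := S n in (padd t (pscale (/ INR n') (psub x t)), n') :: st'
  | p :: st', S i' => p :: upd st' i' x
  end.
Definition skm_step (st : list (pt * nat)) (x : pt) : list (pt * nat) :=
  upd st (closest x (map fst st)) x.
Definition seq_kmeans (k : nat) (xs : list pt) : list pt :=
  map fst (fold_left skm_step (skipn k xs) (map (fun x => (x, 1%nat)) (firstn k xs))).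

(* Main.v *)
Require Import Defs.
From Stdlib Require Import Reals List Permutation Lra Lia.
Import ListNotations.
Import Defs.
Open Scope R_scope.

Definition sqd (p q : pt) : R :=
  let '(a1, a2, a3) := psub p q in a1 ^ 2 + a2 ^ 2 + a3 ^ 2.

Lemma sqd_nonneg p q : 0 <= sqd p q.
Proof. unfold sqd. destruct (psub p q) as [[a1 a2] a3]. nra. Qed.

Lemma dist_sqd p q : dist p q = sqrt (sqd p q).
Proof. unfold dist, pnorm, sqd. destruct (psub p q) as [[a1 a2] a3]. reflexivity. Qed.

Lemma dist_lt_sq p q r s : dist p q < dist r s -> sqd p q < sqd r s.
Proof. rewrite !dist_sqd. apply sqrt_lt_0_alt. Qed.

Lemma dist_nlt_sq p q r s : ~ dist p q < dist r s -> sqd r s <= sqd p q.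
Proof.
  intros H. apply Rnot_lt_le. intro H'. apply H. rewrite !dist_sqd.
  apply sqrt_lt_1_alt. split; [apply sqd_nonneg|exact H'].
Qed.

Lemma sq_lt_dist p q r s : sqd p q < sqd r s -> dist p q < dist r s.
Proof. intro H. rewrite !dist_sqd. apply sqrt_lt_1_alt. split; [apply sqd_nonneg|exact H]. Qed.

Lemma dist_sq2 p q : dist p q ^ 2 = sqd p q.
Proof. rewrite dist_sqd. simpl. rewrite Rmult_1_r. apply sqrt_sqrt, sqd_nonneg. Qed.

Lemma INR1 : INR 1 = 1. Proof. reflexivity. Qed.
Lemma INR2 : INR 2 = 2. Proof. simpl. ring. Qed.
Lemma INR3 : INR 3 = 3. Proof. simpl. ring. Qed.
Lemma INR4 : INR 4 = 4. Proof. simpl. ring. Qed.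

Ltac cmp H := cbv beta iota zeta delta [sqd psub padd pscale fst snd] in H.
Ltac fixinr H := rewrite ?INR1, ?INR2, ?INR3, ?INR4 in H.

Ltac decide_H H :=
  first [ apply dist_lt_sq in H; cmp H; fixinr H; try (exfalso; lra)
        | apply dist_nlt_sq in H; cmp H; fixinr H; try (exfalso; lra)
        | cmp H; try (exfalso; lra) ].

Ltac split_dec :=
  match goal with |- context [Rlt_dec ?u ?v] =>
    let H := fresh "H" in destruct (Rlt_dec u v) as [H|H]; decide_H H end.

Lemma step2_eq t1 t2 n1 n2 x :
  skm_step [(t1, n1); (t2, n2)] x =
  if Rlt_dec (dist x t2) (dist x t1)
  then [(t1, n1); (padd t2 (pscale (/ INR (S n2)) (psub x t2)), S n2)]
  else [(padd t1 (pscale (/ INR (S n1)) (psub x t1)), S n1); (t2, n2)].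
Proof. unfold skm_step, closest. simpl. destruct Rlt_dec; reflexivity. Qed.

Lemma closest2 x t1 t2 :
  closest x [t1; t2] = if Rlt_dec (dist x t2) (dist x t1) then 1%nat else 0%nat.
Proof. unfold closest. simpl. destruct Rlt_dec; reflexivity. Qed.

Lemma seq4 x1 x2 x3 x4 :
  seq_kmeans 2 [x1; x2; x3; x4] =
  map fst (skm_step (skm_step [(x1, 1%nat); (x2, 1%nat)] x3) x4).
Proof. reflexivity. Qed.

Definition pa : pt := (2, 0, 0).
Definition pb : pt := (-2, 0, 0).
Definition pc : pt := (0, 2, 3).
Definition pd : pt := (0, -2, 3).
Definition X0 := [pa; pb; pc; pd].
Definition C1 (x : pt) : bool := if Rlt_dec (snd x) (3/2) then true else false.
Definition C2 (x : pt) : bool := negb (C1 x).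

Ltac run_order :=
  rewrite seq4; rewrite step2_eq; split_dec; rewrite step2_eq; split_dec;
  cbn [map fst]; rewrite !closest2; repeat split_dec.
Lemma C1a : C1 pa = true. Proof. unfold C1, pa. split_dec; reflexivity. Qed.
Lemma C1b : C1 pb = true. Proof. unfold C1, pb. split_dec; reflexivity. Qed.
Lemma C1c : C1 pc = false. Proof. unfold C1, pc. split_dec; reflexivity. Qed.
Lemma C1d : C1 pd = false. Proof. unfold C1, pd. split_dec; reflexivity. Qed.

Lemma fam_labels X T (D1 D2 : pt -> bool) a b c d :
  In a X -> In b X -> In c X -> In d X ->
  D1 a = true -> D1 b = true -> D1 c = false -> D1 d = false ->
  D2 a = false -> D2 b = false -> D2 c = true -> D2 d = true ->
  family_eq X (induced X T) [D1; D2] ->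
  closest a T = closest b T /\ closest c T = closest d T /\ closest a T <> closest c T.
Proof.
  intros Ha Hb Hc Hd h1 h2 h3 h4 h5 h6 h7 h8 [_ H].
  assert (K : forall B, In B [D1; D2] -> exists i, subset_eq X (fun x => Nat.eqb (closest x T) i) B).
  { intros B HB. destruct (H B HB) as [A [HA HAB]].
    unfold induced in HA. apply filter_In in HA. destruct HA as [HA _].
    apply in_map_iff in HA. destruct HA as [i [<- _]]. exists i. exact HAB. }
  destruct (K D1 (or_introl eq_refl)) as [i Hi].
  destruct (K D2 (or_intror (or_introl eq_refl))) as [j Hj].
  unfold subset_eq in Hi, Hj.
  pose proof (Hi a Ha) as e1. pose proof (Hi b Hb) as e2. pose proof (Hi c Hc) as e3.
  pose proof (Hj c Hc) as e4. pose proof (Hj d Hd) as e5.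
  rewrite h1 in e1. rewrite h2 in e2. rewrite h3 in e3. rewrite h7 in e4. rewrite h8 in e5.
  apply Nat.eqb_eq in e1. apply Nat.eqb_eq in e2. apply Nat.eqb_neq in e3.
  apply Nat.eqb_eq in e4. apply Nat.eqb_eq in e5. lia.
Qed.

Lemma perm4 ord : Permutation ord X0 ->
  exists x1 x2 x3 x4, ord = [x1; x2; x3; x4] /\ In x1 X0 /\ In x2 X0 /\ In x3 X0 /\ In x4 X0
   /\ NoDup ord.
Proof.
  intro P. assert (L := Permutation_length P). 
  assert (N : NoDup ord).
  { apply (Permutation_NoDup (Permutation_sym P)). unfold X0, pa, pb, pc, pd.
    repeat constructor; simpl; intro H; repeat destruct H as [H|H];
      try (injection H; intros; lra); auto. }
  destruct ord as [|x1 [|x2 [|x3 [|x4 [|x5 r]]]]]; simpl in L; try discriminate.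
  exists x1, x2, x3, x4. repeat split; auto; apply (Permutation_in _ P); simpl; tauto.
Qed.

Lemma orders : forall ord, Permutation ord X0 ->
  ~ family_eq X0 (induced X0 (seq_kmeans 2 ord)) [C1; C2].
Proof.
  intros ord P F.
  assert (Hl := fam_labels X0 (seq_kmeans 2 ord) C1 C2 pa pb pc pd).
  unfold C2 in Hl. rewrite C1a, C1b, C1c, C1d in Hl. simpl negb in Hl.
  specialize (Hl ltac:(simpl; tauto) ltac:(simpl; tauto) ltac:(simpl; tauto) ltac:(simpl; tauto)
    eq_refl eq_refl eq_refl eq_refl eq_refl eq_refl eq_refl eq_refl F).
  clear F. revert Hl.
  destruct (perm4 ord P) as [x1 [x2 [x3 [x4 [-> [I1 [I2 [I3 [I4 N]]]]]]]]].
  clear P. unfold X0 in *. simpl in I1, I2, I3, I4.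
  repeat destruct I1 as [I1|I1]; try contradiction; subst x1;
  repeat destruct I2 as [I2|I2]; try contradiction; subst x2;
  repeat destruct I3 as [I3|I3]; try contradiction; subst x3;
  repeat destruct I4 as [I4|I4]; try contradiction; subst x4;
  repeat (let H := fresh "Hn" in apply NoDup_cons_iff in N; destruct N as [H N]);
  try solve [exfalso; match goal with H : ~ In _ _ |- _ => apply H; simpl; tauto end].
  all: unfold pa, pb, pc, pd; run_order; lia.
Qed.
Lemma perf : perfect2 X0 C1 C2.
Proof.
  intros x y w z Ix Iy Iw Iz S1 S2. unfold X0 in *. simpl in Ix, Iy, Iw, Iz.
  unfold same_cluster, C2 in S1, S2.
  repeat destruct Ix as [Ix|Ix]; try contradiction; subst x;
  repeat destruct Iy as [Iy|Iy]; try contradiction; subst y;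
  repeat destruct Iw as [Iw|Iw]; try contradiction; subst w;
  repeat destruct Iz as [Iz|Iz]; try contradiction; subst z;
  rewrite ?C1a, ?C1b, ?C1c, ?C1d in S1; rewrite ?C1a, ?C1b, ?C1c, ?C1d in S2; simpl in S1, S2; try discriminate;
  apply sq_lt_dist; unfold pa, pb, pc, pd;
  cbv beta iota zeta delta [sqd psub padd pscale fst snd]; lra.
Qed.

Ltac costcomp :=
  unfold cost2, cluster_cost, mean, X0; cbn [filter];
  repeat match goal with H : ?D ?p = _ |- _ => rewrite H end;
  cbn [map fold_right length psum]; rewrite ?dist_sq2, ?INR1, ?INR2, ?INR3, ?INR4;
  unfold pa, pb, pc, pd;
  cbv beta iota zeta delta [sqd psub padd pscale fst snd pzero].

Lemma costC : cost2 X0 C1 C2 = 16.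
Proof.
  assert (e1 := C1a). assert (e2 := C1b). assert (e3 := C1c). assert (e4 := C1d).
  assert (f1 : C2 pa = false) by (unfold C2; rewrite C1a; reflexivity).
  assert (f2 : C2 pb = false) by (unfold C2; rewrite C1b; reflexivity).
  assert (f3 : C2 pc = true) by (unfold C2; rewrite C1c; reflexivity).
  assert (f4 : C2 pd = true) by (unfold C2; rewrite C1d; reflexivity).
  costcomp. lra.
Qed.

Lemma opt : forall D1 D2 : pt -> bool, is_2clustering X0 D1 D2 ->
        cost2 X0 C1 C2 <= cost2 X0 D1 D2.
Proof.
  intros D1 D2 [E1 [E2 H]]. rewrite costC.
  assert (ha := H pa ltac:(simpl; tauto)). assert (hb := H pb ltac:(simpl; tauto)).
  assert (hc := H pc ltac:(simpl; tauto)). assert (hd := H pd ltac:(simpl; tauto)).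
  clear H. unfold X0 in E1, E2. cbn [existsb] in E1, E2.
  destruct (D2 pa) eqn:Ea; destruct (D2 pb) eqn:Eb; destruct (D2 pc) eqn:Ec;
  destruct (D2 pd) eqn:Ed; simpl negb in ha, hb, hc, hd;
  rewrite ?ha, ?hb, ?hc, ?hd in E1; simpl in E1, E2; try discriminate;
  costcomp; lra.
Qed.

Theorem mainTheorem6 :
  exists X : list pt, length X = 4%nat /\ NoDup X /\
  exists C1 C2 : pt -> bool,
    is_2clustering X C1 C2 /\
    perfect2 X C1 C2 /\
    (forall D1 D2 : pt -> bool, is_2clustering X D1 D2 ->
        cost2 X C1 C2 <= cost2 X D1 D2) /\
    (forall ord : list pt, Permutation ord X ->
        ~ family_eq X (induced X (seq_kmeans 2 ord)) [C1; C2]).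
Proof.
  exists X0. split; [reflexivity|]. split.
  { unfold X0, pa, pb, pc, pd.
    repeat constructor; simpl; intro H; repeat destruct H as [H|H];
      try (injection H; intros; lra); auto. }
  exists C1, C2. split; [|split; [exact perf|split; [exact opt|exact orders]]].
  split; [|split].
  - unfold X0. simpl. rewrite C1a. reflexivity.
  - unfold X0. simpl. unfold C2. rewrite C1a, C1b, C1c. reflexivity.
  - intros x Hx. unfold C2. rewrite Bool.negb_involutive. reflexivity.
Qed.
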